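(* Let $M$ be a duplicial module in a pre-additive category, and define the Connes operator $B_n=\sum_{i=0}^n d_n\kappa_n^i:M_n\to M_{n+1}$ for $n\ge0$ (and $B_{-1}=0$). Then for all $n\ge0$, $$b_{n+1}B_n+B_{n-1}b_n=1-\pi_n\qquad\text{and}\qquad B_{n+1}B_n=0 .$$
   Context: Let $\mathcal A$ be a pre-additive category. Let $\Lambda_+$ be the category with objects $[n]$, $n\ge0$, where $\Lambda_+([m],[n])$ is the set of weakly monotone $f:\mathbb Z\to\mathbb Z$ with $f(j+m+1)=f(j)+n+1$ for all $j$ and $f(0)\ge0$. Define $\varepsilon^n_i:[n-1]\to[n]$ ($n\ge1$, $0\le i\le n$) by $\varepsilon^n_i(j)=j$ for $0\le j<i$, $j+1$ for $i\le j\le n-1$, and $\eta^n_i:[n+1]\to[n]$ ($0\le i\le n+1$) by $\eta^n_i(j)=j$ for $0\le j\le i$, $j-1$ for $i<j\le n+1$. A duplicial module is a functor $M:\Lambda_+^{op}\to\mathcal A$; $M_n=M([n])$, $\partial_{n,i}=M(\varepsilon^n_i):M_n\to M_{n-1}$, $s_{n,i}=M(\eta^n_i):M_n\to M_{n+1}$. Convention $M_{-1}=0$, maps into/out of it zero. Define $b_n=\sum_{i=0}^n(-1)^i\partial_{n,i}$ ($b_0=0$), $d_n=\sum_{i=0}^{n+1}(-1)^is_{n,i}$, the Karoubi operator $\kappa_n=(-1)^n(\partial_{n+1,0}s_{n,n+1}-s_{n-1,n}\partial_{n,0})$ (so $\kappa_0=\partial_{1,0}s_{0,1}$), and the Dwyer–Kan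 operator $\pi_n=(-1)^n\partial_{n+1,0}\kappa_{n+1}^n s_{n,n+1}$. *)

(* Defs.v *)
From HB Require Import structures.
From mathcomp Require Import all_boot all_order all_algebra.
Set Implicit Arguments. Unset Strict Implicit. Unset Printing Implicit Defensive.
Import GRing.Theory.
Local Open Scope ring_scope.

Record preadditive := PreAdditive {
  Ob : Type;
  Hom : Ob -> Ob -> zmodType;
  hcomp : forall a b c : Ob, Hom b c -> Hom a b -> Hom a c;
  idm : forall a : Ob, Hom a a;
  compA : forall a b c d (f : Hom c d) (g : Hom b c) (h : Hom a b),
      hcomp f (hcomp g h) = hcomp (hcomp f g) h;
  comp1m : forall a b (f : Hom a b), hcomp (idm b) f = f;
  compm1 : forall a b (f : Hom a b), hcomp f (idm a) = f;
  compDl : forall a b c (f g : Hom b c) (h : Hom a b),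
      hcomp (f + g) h = hcomp f h + hcomp g h;
  compDr : forall a b c (f : Hom b c) (g h : Hom a b),
      hcomp f (g + h) = hcomp f g + hcomp f h
}.

Arguments hcomp {p a b c}.
Arguments idm {p}.

(* Morphisms [m] -> [n] of Lambda_+ : weakly monotone f : Z -> Z with
   f(j + m + 1) = f(j) + n + 1 and f(0) >= 0. *)
Definition in_Lambda (m n : nat) (f : int -> int) : Prop :=
  (forall j j' : int, j <= j' -> f j <= f j') /\
  (forall j : int, f (j + (m.+1)%:Z) = f j + (n.+1)%:Z) /\
  0 <= f 0.

(* A duplicial module: a functor Lambda_+^op -> A.  [Mmap m n f] is M(f) for
   f : [m] -> [n]  (its values on non-morphisms are irrelevant). *)
Record duplicial (A : preadditive) := Duplicial {
  Mob : nat -> Ob A;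
  Mmap : forall m n : nat, (int -> int) -> Hom (Mob n) (Mob m);
  Mmap_id : forall m : nat, Mmap m m (fun j => j) = idm (Mob m);
  Mmap_comp : forall (m n p : nat) (f g : int -> int),
      in_Lambda m n f -> in_Lambda n p g ->
      Mmap m p (g \o f) = hcomp (Mmap m n f) (Mmap n p g)
}.

(* Quasi-periodic extension to Z of a map given on {0,...,p-1}, with
   f(j + p) = f(j) + q. *)
Definition qext (p q : nat) (g : nat -> int) (j : int) : int :=
  (j %/ p%:Z)%Z * q%:Z + g `|(j %% p%:Z)%Z|%N.

(* epsL k i = epsilon^{k+1}_i : [k] -> [k+1] *)
Definition epsL (k i : nat) : int -> int :=
  qext k.+1 k.+2 (fun j => if (j < i)%N then j%:Z else j.+1%:Z).

Definition etaL (n i : nat) : int -> int :=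
  qext n.+2 n.+1 (fun j => if (j <= i)%N then j%:Z else j.-1%:Z).

Section Ops.
Variables (A : preadditive) (M : duplicial A).

Definition Mo := Mob M.

(* face k i = partial_{k+1,i} : M_{k+1} -> M_k *)
Definition face (k i : nat) : Hom (Mo k.+1) (Mo k) := Mmap M k k.+1 (epsL k i).

Definition degen (n i : nat) : Hom (Mo n) (Mo n.+1) := Mmap M n.+1 n (etaL n i).

Definition sgn (i : nat) : int := (-1) ^+ i.

(* bS k = b_{k+1} : M_{k+1} -> M_k   (b_0 = 0) *)
Definition bS (k : nat) : Hom (Mo k.+1) (Mo k) :=
  \sum_(i < k.+2) face k i *~ sgn i.

Definition dd (n : nat) : Hom (Mo n) (Mo n.+1) :=
  \sum_(i < n.+2) degen n i *~ sgn i.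

Definition kappa (n : nat) : Hom (Mo n) (Mo n) :=
  match n return Hom (Mo n) (Mo n) with
  | 0 => hcomp (face 0 0) (degen 0 1)
  | k.+1 => (hcomp (face k.+1 0) (degen k.+1 k.+2)
             - hcomp (degen k k.+1) (face k 0)) *~ sgn k.+1
  end.

Definition endo_pow (a : Ob A) (f : Hom a a) (k : nat) : Hom a a :=
  iter k (fun g => hcomp f g) (idm a).

Definition piDK (n : nat) : Hom (Mo n) (Mo n) :=
  hcomp (face n 0) (hcomp (endo_pow (kappa n.+1) n) (degen n n.+1)) *~ sgn n.

Definition connesB (n : nat) : Hom (Mo n) (Mo n.+1) :=
  \sum_(i < n.+1) hcomp (dd n) (endo_pow (kappa n) i).

(* B_{n-1} b_n, which is 0 for n = 0 (B_{-1} = 0, b_0 = 0) *)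
Definition Bb_low (n : nat) : Hom (Mo n) (Mo n) :=
  match n return Hom (Mo n) (Mo n) with
  | 0 => 0
  | k.+1 => hcomp (connesB k) (bS k)
  end.

End Ops.

(* Main.v *)
Require Import Defs.
From HB Require Import structures.
From mathcomp Require Import all_boot all_order all_algebra zify ring.
From Stdlib Require Import FunctionalExtensionality.
Import GRing.Theory Num.Theory Order.TTheory.
Local Open Scope ring_scope.

Lemma sgnS k : sgn k.+1 = - sgn k.
Proof. by rewrite /sgn exprS mulN1r. Qed.
Lemma zS (U : zmodType) (x : U) k : x *~ sgn k.+1 = - (x *~ sgn k).
Proof. by rewrite sgnS mulrNz. Qed.
Lemma z0 (U : zmodType) (x : U) : x *~ sgn 0 = x.
Proof. by rewrite /sgn expr0 mulr1z. Qed.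
Lemma sgn_sq k : sgn k * sgn k = 1.
Proof. by rewrite /sgn -exprMn mulrNN mulr1 expr1n. Qed.
Lemma zz (U : zmodType) (x : U) k : x *~ sgn k *~ sgn k = x.
Proof. by rewrite -mulrzA sgn_sq mulr1z. Qed.
Lemma sgn_odd k : sgn k = (-1) ^+ (odd k).
Proof. by rewrite /sgn signr_odd. Qed.

Lemma sgn_case k : sgn k = 1 \/ sgn k = -1.
Proof. rewrite sgn_odd; case: odd; [right; exact: expr1 | left; exact: expr0]. Qed.

Lemma sgn0 : sgn 0 = 1. Proof. by []. Qed.

Ltac cfin := rewrite ?sgnS ?sgn0;
  repeat (match goal with |- context [sgn ?k] => case: (sgn_case k) => -> end); ring.

Inductive aexp := AVar of nat | A0 | AAdd of aexp & aexp | AOpp of aexp | AZ of aexp & int.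

Fixpoint aeval (U : zmodType) (env : seq U) (e : aexp) : U :=
  match e with
  | AVar i => nth 0 env i
  | A0 => 0
  | AAdd a b => aeval U env a + aeval U env b
  | AOpp a => - aeval U env a
  | AZ a z => aeval U env a *~ z
  end.
Arguments aeval {U}.

Fixpoint ccoef (e : aexp) (k : nat) : int :=
  match e with
  | AVar i => if eqn i k then 1 else 0
  | A0 => 0
  | AAdd a b => ccoef a k + ccoef b k
  | AOpp a => - ccoef a k
  | AZ a z => ccoef a k * z
  end.

Fixpoint abound (e : aexp) : nat :=
  match e with
  | AVar i => i.+1
  | A0 => 0
  | AAdd a b => maxn (abound a) (abound b)
  | AOpp a => abound a
  | AZ a _ => abound a
  end.

Lemma ccoef_out e k : (abound e <= k)%N -> ccoef e k = 0.
Proof.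
elim: e => [i||a IHa b IHb|a IHa|a IHa z] /=.
- move=> h; case: eqnP => // ik; subst k; by rewrite ltnn in h.
- by [].
- by rewrite geq_max => /andP[/IHa -> /IHb ->]; rewrite addr0.
- by move/IHa ->; rewrite oppr0.
- by move/IHa ->; rewrite mul0r.
Qed.

Lemma aeval_sum (U : zmodType) (env : seq U) e N : (abound e <= N)%N ->
  aeval env e = \sum_(k < N) nth 0 env k *~ ccoef e k.
Proof.
elim: e N => [i||a IHa b IHb|a IHa|a IHa z] N /=.
- move=> h; rewrite (bigD1 (Ordinal h)) //=.
  have -> : eqn i i = true by apply/eqnP.
  rewrite mulr1z big1 ?addr0 //.
  move=> k /eqP hk; case: eqnP => [ik|]; last by rewrite mulr0z.
  by case: hk; apply: val_inj; rewrite /= ik.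
- by move=> _; rewrite big1 // => k _; rewrite mulr0z.
- rewrite geq_max => /andP[ha hb]; rewrite (IHa N) // (IHb N) // -big_split /=.
  by apply: eq_bigr => k _; rewrite mulrzDr.
- by move=> h; rewrite (IHa N) // -sumrN; apply: eq_bigr => k _; rewrite mulrNz.
- move=> h; rewrite (IHa N) //.
  rewrite (big_morph (fun x : U => x *~ z) (fun x y => @mulrzDl U z x y) (@mul0rz U z)).
  by apply: eq_bigr => k _; rewrite mulrzA.
Qed.

Lemma abel_ok (U : zmodType) (env : seq U) e1 e2 :
  (forall k, ccoef e1 k = ccoef e2 k) -> aeval env e1 = aeval env e2.
Proof.
move=> h; rewrite (@aeval_sum U env _ _ (leq_maxl (abound e1) (abound e2))).
rewrite (@aeval_sum U env _ _ (leq_maxr (abound e1) (abound e2))).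
by apply: eq_bigr => k _; rewrite h.
Qed.

Ltac addat x l :=
  lazymatch l with
  | nil => constr:(x :: nil)
  | x :: _ => l
  | ?y :: ?r => let r' := addat x r in constr:(y :: r')
  end.

Ltac collect t l :=
  lazymatch t with
  | ?a + ?b => let l1 := collect a l in collect b l1
  | - ?a => collect a l
  | ?a *~ _ => collect a l
  | 0 => l
  | _ => addat t l
  end.

Ltac idx x l :=
  lazymatch l with
  | x :: _ => constr:(0%N)
  | _ :: ?r => let i := idx x r in constr:(i.+1)
  end.

Ltac reify t l :=
  lazymatch t with
  | ?a + ?b => let ra := reify a l in let rb := reify b l in constr:(AAdd ra rb)
  | - ?a => let ra := reify a l in constr:(AOpp ra)
  | ?a *~ ?z => let ra := reify a l in constr:(AZ ra z)
  | 0 => constr:(A0)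
  | _ => let i := idx t l in constr:(AVar i)
  end.

Ltac kcases k n :=
  lazymatch n with
  | O => cbv beta iota delta [ccoef eqn]; cfin
  | S ?n' => destruct k as [|k]; [cbv beta iota delta [ccoef eqn]; cfin | kcases k n']
  end.

Ltac abel :=
  lazymatch goal with
  | |- @eq ?T ?x ?y =>
    let l := collect x (@nil T) in
    let l := collect y l in
    let e1 := reify x l in
    let e2 := reify y l in
    let n := eval compute in (size l) in
    change (aeval l e1 = aeval l e2); apply: abel_ok;
    let k := fresh "k" in intro k; kcases k n
  end.


Lemma qext_shift p q g (x k : int) : (0 < p)%N ->
  qext p q g (x + k * p%:Z) = qext p q g x + k * q%:Z.
Proof.
move=> p0; rewrite /qext.
have pn0 : p%:Z != 0 by rewrite eqz_nat -lt0n.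
rewrite (addrC x) divzMDl // modzMDl mulrDl; lia.
Qed.

Lemma qext_nat p q g (y : nat) : (0 < p)%N -> (y <= p)%N ->
  qext p q g (Posz y) = if (y < p)%N then g y else q%:Z + g 0%N.
Proof.
move=> p0 yp; case: ifP => ylt.
  rewrite /qext divz_small ?modz_small ?mul0r ?add0r //; apply/andP; split=> //;
   rewrite ?ltz_nat ?normr_nat //.
have -> : y = p by apply/eqP; rewrite eqn_leq yp leqNgt ylt.
have -> : Posz p = 0 + 1 * p%:Z by rewrite mul1r add0r.
rewrite qext_shift // mul1r addrC /qext divz_small ?modz_small ?mul0r ?add0r //.
Qed.

Lemma qext_small p q g (y : nat) : (y < p)%N -> qext p q g (Posz y) = g y.
Proof. by move=> yp; rewrite qext_nat ?yp // (leq_trans _ yp). Qed.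

Lemma absz_mod (j : int) (r : nat) : (0 < r)%N -> (`|(j %% r%:Z)%Z|%N < r)%N.
Proof.
move=> r0; have rn0 : r%:Z != 0 by rewrite eqz_nat -lt0n.
have h1 := modz_ge0 j rn0.
have h2 : (j %% r%:Z)%Z < r%:Z by apply: ltz_pmod; rewrite ltz_nat.
lia.
Qed.

Lemma qext_decomp p q g (a : int) (y : nat) : (y < p)%N ->
  qext p q g (a * p%:Z + Posz y) = a * q%:Z + g y.
Proof.
move=> yp; have p0 : (0 < p)%N by apply: leq_ltn_trans yp.
by rewrite addrC qext_shift // qext_small // addrC.
Qed.

Lemma qext_comp p q r g h : (0 < p)%N ->
  qext p q g \o qext r p h = qext r q (fun i => qext p q g (h i)).
Proof.
move=> p0; apply: functional_extensionality => j /=.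
by rewrite [qext r p h j]/qext (addrC _ (h _)) qext_shift // addrC [RHS]/qext.
Qed.

Lemma qext_ext r q g1 g2 : (0 < r)%N -> (forall i, (i < r)%N -> g1 i = g2 i) ->
  qext r q g1 = qext r q g2.
Proof.
move=> r0 H; apply: functional_extensionality => j; rewrite /qext H //.
exact: absz_mod.
Qed.

Lemma qext_id r : (0 < r)%N -> qext r r (fun i => Posz i) = (fun j => j).
Proof.
move=> r0; apply: functional_extensionality => j; rewrite /qext.
have rn0 : r%:Z != 0 by rewrite eqz_nat -lt0n.
have h1 := modz_ge0 j rn0.
rewrite abszE ger0_norm //; exact/esym/divz_eq.
Qed.

Lemma mono_step (F : int -> int) : (forall j, F j <= F (j + 1)) ->
  forall j j', j <= j' -> F j <= F j'.
Proof.
move=> step j j' le.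
have [k ->] : exists k : nat, j' = j + k%:Z.
  by exists `|j' - j|%N; rewrite abszE ger0_norm ?subr_ge0 //; lia.
elim: k => [|k IH]; first by rewrite addr0.
apply: le_trans IH _; rewrite -[k.+1]addn1 PoszD addrA; exact: step.
Qed.

Lemma in_Lambda_qext m n g :
  (forall a b : nat, (a <= b <= m)%N -> g a <= g b) ->
  g m <= n.+1%:Z + g 0%N -> 0 <= g 0%N ->
  in_Lambda m n (qext m.+1 n.+1 g).
Proof.
move=> mono gm g0; split; [|split].
- apply: mono_step => j.
  have r0 : (0 < m.+1)%N by [].
  have rn0 : m.+1%:Z != 0 by [].
  set a := (j %/ m.+1%:Z)%Z; set r := `|(j %% m.+1%:Z)%Z|%N.
  have rlt : (r < m.+1)%N by apply: absz_mod.
  have hj : j = a * m.+1%:Z + Posz r.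
    rewrite /r abszE ger0_norm; [exact: divz_eq | exact: modz_ge0].
  rewrite hj qext_decomp //.
  case: (ltnP r m) => rm.
    have -> : a * m.+1%:Z + Posz r + 1 = a * m.+1%:Z + Posz r.+1 by lia.
    rewrite qext_decomp; last by lia.
    by rewrite lerD2l; apply: mono; lia.
  have -> : a * m.+1%:Z + Posz r + 1 = (a + 1) * m.+1%:Z + Posz 0 by lia.
  rewrite qext_decomp // mulrDl mul1r -addrA lerD2l.
  have -> : r = m by lia.
  done.
- move=> j; have -> : j + m.+1%:Z = j + 1 * m.+1%:Z by rewrite mul1r.
  by rewrite qext_shift // mul1r.
- by rewrite qext_small.
Qed.

Definition sig (n : nat) : int -> int := qext n.+1 n.+1 (fun j => (j.+1)%:Z).

Lemma in_eps k i : in_Lambda k k.+1 (epsL k i).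
Proof.
apply: in_Lambda_qext => [a b /andP[ab bm]||]; rewrite /=;
  repeat case: ifP => [?|/negbT ?]; lia.
Qed.

Lemma in_eta n i : in_Lambda n.+1 n (etaL n i).
Proof.
apply: in_Lambda_qext => [a b /andP[ab bm]||]; rewrite /=;
  repeat case: ifP => [?|/negbT ?]; lia.
Qed.

Lemma in_sig n : in_Lambda n n (sig n).
Proof. apply: in_Lambda_qext => [a b /andP[ab bm]||]; lia. Qed.

#[local] Hint Resolve in_eps in_eta in_sig : core.

Ltac crunch :=
  repeat (first [ progress (rewrite qext_nat; [|by []|lia]); cbv beta
                | progress (rewrite ?leq0n ?ltn0 ?ltn0Sn); cbv iota beta
                | let H := fresh "H" in case: ifP => H; try move/negbT in H; cbv beta ]); try lia.

Lemma addmorph_z (U V : zmodType) (phi : U -> V) :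
  (forall x y, phi (x + y) = phi x + phi y) -> forall x z, phi (x *~ z) = phi x *~ z.
Proof.
move=> hD.
have h0 : phi 0 = 0 by apply: (addrI (phi 0)); rewrite -hD !addr0.
have hN : forall x, phi (- x) = - phi x.
  by move=> x; apply/eqP; rewrite -subr_eq0 opprK -hD addNr h0.
have hn : forall x k, phi (x *+ k) = phi x *+ k.
  by move=> x; elim=> [|k IH]; rewrite ?mulr0n // !mulrS hD IH.
by move=> x [k|k]; rewrite /= ?hn // hN hn.
Qed.

Arguments addmorph_z {U V phi}.

Section Pre.
Variable A : preadditive.
Implicit Types a b c d : Ob A.

Lemma hcomp0r a b c (f : Defs.Hom b c) : hcomp f (0 : Defs.Hom a b) = 0.
Proof. by apply: (addrI (hcomp f 0)); rewrite -compDr !addr0. Qed.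
Lemma hcomp0l a b c (g : Defs.Hom a b) : hcomp (0 : Defs.Hom b c) g = 0.
Proof. by apply: (addrI (hcomp 0 g)); rewrite -compDl !addr0. Qed.
Lemma hcompzr a b c (f : Defs.Hom b c) (g : Defs.Hom a b) z : hcomp f (g *~ z) = hcomp f g *~ z.
Proof. exact: (addmorph_z (@compDr A _ _ _ f)). Qed.
Lemma hcompzl a b c (f : Defs.Hom b c) (g : Defs.Hom a b) z : hcomp (f *~ z) g = hcomp f g *~ z.
Proof. exact: (addmorph_z (fun x y => @compDl A _ _ _ x y g)). Qed.
Lemma hcompNr a b c (f : Defs.Hom b c) (g : Defs.Hom a b) : hcomp f (- g) = - hcomp f g.
Proof. by rewrite -mulrN1z hcompzr mulrN1z. Qed.
Lemma hcompNl a b c (f : Defs.Hom b c) (g : Defs.Hom a b) : hcomp (- f) g = - hcomp f g.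
Proof. by rewrite -mulrN1z hcompzl mulrN1z. Qed.
Lemma hcompBr a b c (f : Defs.Hom b c) (g h : Defs.Hom a b) : hcomp f (g - h) = hcomp f g - hcomp f h.
Proof. by rewrite compDr hcompNr. Qed.
Lemma hcompBl a b c (f g : Defs.Hom b c) (h : Defs.Hom a b) : hcomp (f - g) h = hcomp f h - hcomp g h.
Proof. by rewrite compDl hcompNl. Qed.
Lemma hcomp_sumr a b c (f : Defs.Hom b c) I r (P : pred I) (F : I -> Defs.Hom a b) :
  hcomp f (\sum_(i <- r | P i) F i) = \sum_(i <- r | P i) hcomp f (F i).
Proof. by apply: (big_morph (hcomp f)); [move=> x y; rewrite compDr | rewrite hcomp0r]. Qed.
Lemma hcomp_suml a b c (g : Defs.Hom a b) I r (P : pred I) (F : I -> Defs.Hom b c) :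
  hcomp (\sum_(i <- r | P i) F i) g = \sum_(i <- r | P i) hcomp (F i) g.
Proof. by apply: (big_morph (fun x => hcomp x g)); [move=> x y; rewrite compDl | rewrite hcomp0l]. Qed.

Lemma pow_add a (f : Defs.Hom a a) i j : endo_pow f (i + j) = hcomp (endo_pow f i) (endo_pow f j).
Proof.
elim: i => [|i IH]; first by rewrite add0n /= comp1m.
by rewrite addSn /= IH Defs.compA.
Qed.
Lemma pow_S a (f : Defs.Hom a a) i : endo_pow f i.+1 = hcomp f (endo_pow f i).
Proof. by []. Qed.
Lemma pow_Sr a (f : Defs.Hom a a) i : endo_pow f i.+1 = hcomp (endo_pow f i) f.
Proof. by rewrite -addn1 pow_add /= compm1. Qed.
Lemma pow_z a (f : Defs.Hom a a) z i : endo_pow (f *~ z) i = endo_pow f i *~ (z ^+ i).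
Proof.
elim: i => [|i IH]; first by rewrite /= mulr1z.
by rewrite !pow_S IH hcompzr hcompzl -mulrzA exprS mulrC.
Qed.
End Pre.

Local Notation hA := Defs.compA.
Ltac hnorm := rewrite ?compDl ?compDr ?hcompzl ?hcompzr ?hcompBl ?hcompBr ?hcompNl ?hcompNr ?hcomp0l ?hcomp0r.

Section Alg.
Variables (A : preadditive) (M : duplicial A).
Lemma mcomp m n p f g : in_Lambda m n f -> in_Lambda n p g ->
  hcomp (Mmap M m n f) (Mmap M n p g) = Mmap M m p (g \o f).
Proof. by move=> hf hg; rewrite (Mmap_comp M hf hg). Qed.

Definition T n : Defs.Hom (Mo M n) (Mo M n) := hcomp (face M n 0) (degen M n n.+1).

Lemma T_sig n : T n = Mmap M n n (sig n).
Proof.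
rewrite /T /face /degen mcomp //; f_equal.
rewrite /epsL /etaL qext_comp //; apply: qext_ext => // x hx; crunch.
Qed.

Lemma fs_same n j : (j <= n.+1)%N -> hcomp (face M n j) (degen M n j) = idm (Mo M n).
Proof.
move=> hj; rewrite /face /degen mcomp // -(Mmap_id M n).
f_equal; rewrite -(@qext_id n.+1) // /epsL /etaL qext_comp //.
apply: qext_ext => // x hx; crunch.
Qed.

Ltac rel := rewrite /face /degen ?T_sig !mcomp //; f_equal;
  rewrite /epsL /etaL /sig !qext_comp //; apply: qext_ext => // x hx; crunch.

Lemma fs_succ n j : (j <= n)%N -> hcomp (face M n j.+1) (degen M n j) = idm (Mo M n).
Proof.
move=> hj; rewrite /face /degen mcomp // -(Mmap_id M n).
f_equal; rewrite -(@qext_id n.+1) // /epsL /etaL qext_comp //.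
apply: qext_ext => // x hx; crunch.
Qed.

Lemma fs_lt m i j : (i < j)%N -> (j <= m.+2)%N -> ~~ ((i == 0%N) && (j == m.+2)) ->
  hcomp (face M m.+1 i) (degen M m.+1 j) = hcomp (degen M m j.-1) (face M m i).
Proof. move=> h1 h2 h3; rel. Qed.

Lemma fs_gt m i j : (j.+1 < i)%N -> (i <= m.+2)%N ->
  hcomp (face M m.+1 i) (degen M m.+1 j) = hcomp (degen M m j) (face M m i.-1).
Proof. move=> h1 h2; rel. Qed.

Lemma ss_rel n i j : (i <= j)%N -> (j <= n.+1)%N ->
  hcomp (degen M n.+1 i) (degen M n j) = hcomp (degen M n.+1 j.+1) (degen M n i).
Proof. move=> h1 h2; rel. Qed.

Lemma ff_rel m i j : (i < j)%N -> (j <= m.+2)%N ->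
  hcomp (face M m i) (face M m.+1 j) = hcomp (face M m j.-1) (face M m.+1 i).
Proof. move=> h1 h2; rel. Qed.

Lemma Tf_rel n i : (i <= n)%N ->
  hcomp (face M n i) (T n.+1) = hcomp (T n) (face M n i.+1).
Proof. move=> h1; rel. Qed.

Lemma Tlast n : hcomp (face M n n.+1) (T n.+1) = face M n 0.
Proof. rel. Qed.

Lemma Ts0 n : hcomp (T n.+1) (degen M n 0) = degen M n n.+1.
Proof. rel. Qed.

Lemma Ts_rel n j : (j <= n)%N ->
  hcomp (T n.+1) (degen M n j.+1) = hcomp (degen M n j) (T n).
Proof. move=> h1; rel. Qed.


Definition P m k : Defs.Hom (Mo M m.+1) (Mo M m) := \sum_(i < k) face M m i *~ sgn i.
Definition D n k : Defs.Hom (Mo M n) (Mo M n.+1) := \sum_(i < k) degen M n i *~ sgn i.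
Definition K n : Defs.Hom (Mo M n) (Mo M n) :=
  match n return Defs.Hom (Mo M n) (Mo M n) with
  | 0 => T 0
  | m.+1 => T m.+1 - hcomp (degen M m m.+1) (face M m 0)
  end.

Lemma P0 m : P m 0 = 0. Proof. by rewrite /P big_ord0. Qed.
Lemma PS m k : P m k.+1 = P m k + face M m k *~ sgn k.
Proof. by rewrite /P big_ord_recr. Qed.
Lemma D0 n : D n 0 = 0. Proof. by rewrite /D big_ord0. Qed.
Lemma DS n k : D n k.+1 = D n k + degen M n k *~ sgn k.
Proof. by rewrite /D big_ord_recr. Qed.
Lemma P1 m : P m 1 = face M m 0.
Proof. by rewrite PS P0 add0r z0. Qed.
Lemma kappaK n : kappa M n = K n *~ sgn n.
Proof. by case: n => [|n] //=; rewrite z0. Qed.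

Lemma PsA m j k : (k <= j)%N -> (j <= m.+1)%N ->
  hcomp (P m.+1 k) (degen M m.+1 j) = hcomp (degen M m j.-1) (P m k).
Proof.
move=> hk hj; elim: k hk => [|k IH] hk; first by rewrite !P0 hcomp0l hcomp0r.
rewrite !PS compDl compDr hcompzl hcompzr IH ?(ltnW hk) // fs_lt //; lia.
Qed.

Lemma PsC m j l : (j <= m.+1)%N -> (j.+2 + l <= m.+3)%N ->
  hcomp (P m.+1 (j.+2 + l)) (degen M m.+1 j) =
  hcomp (degen M m j.-1) (P m j) - hcomp (degen M m j) (P m (j.+1 + l) - P m j.+1).
Proof.
move=> hj; elim: l => [|l IH] hl.
  rewrite !addn0 subrr hcomp0r subr0 !PS !compDl !hcompzl PsA // -addrA.
  have h1 : (j <= m.+2)%N by lia.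
  by rewrite fs_same // fs_succ // zS addrN addr0.
rewrite addnS PS compDl IH; last lia.
rewrite hcompzl fs_gt; [|lia|lia].
rewrite (addnS j.+1).
have -> : (j.+2 + l)%N = (j.+1 + l).+1 by lia.
rewrite -pred_Sn zS [P m (j.+1 + l).+1]PS.
set a := hcomp (degen M m j.-1) _; set X := P m (j.+1 + l).
set W := face M m (j.+1 + l) *~ _; set Y := P m j.+1.
rewrite !hcompBr compDr hcompzr -/W.
abel.
Qed.

Lemma PsT m l : (l <= m.+1)%N ->
  hcomp (P m.+1 l.+1) (degen M m.+1 m.+2) = T m.+1 + hcomp (degen M m m.+1) (P m l.+1 - face M m 0).
Proof.
elim: l => [|l IH] hl; first by rewrite !P1 subrr hcomp0r addr0.
rewrite PS compDl IH ?(ltnW hl) // hcompzl (@fs_lt m l.+1 m.+2) //=.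
rewrite [P m l.+2]PS; hnorm; abel.
Qed.

Lemma BS m j : (j <= m.+1)%N ->
  hcomp (bS M m.+1) (degen M m.+1 j) + hcomp (degen M m j) (bS M m) =
  hcomp (degen M m j.-1) (P m j) + hcomp (degen M m j) (P m j.+1).
Proof.
move=> hj; change (bS M m.+1) with (P m.+1 m.+3); change (bS M m) with (P m m.+2).
have e1 : (m.+3 = j.+2 + (m.+1 - j))%N by lia.
have e2 : (m.+2 = j.+1 + (m.+1 - j))%N by lia.
rewrite [in LHS]e1 PsC -?e1 -?e2 //; hnorm; abel.
Qed.

Lemma BD m l : (l <= m.+1)%N ->
  hcomp (bS M m.+1) (D m.+1 l.+1) + hcomp (D m l.+1) (bS M m) =
  hcomp (degen M m l) (P m l.+1) *~ sgn l.
Proof.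
elim: l => [|l IH] hl.
  rewrite !DS !D0 !add0r; hnorm; have := @BS m 0 (leq0n _); rewrite P0 hcomp0r add0r => <-.
  abel.
rewrite DS [D m l.+2]DS; hnorm.
have h := @BS m l.+1 hl; rewrite /= in h.
have := IH (ltnW hl) => IH'.
transitivity ((hcomp (bS M m.+1) (D m.+1 l.+1) + hcomp (D m l.+1) (bS M m)) +
  (hcomp (bS M m.+1) (degen M m.+1 l.+1) + hcomp (degen M m l.+1) (bS M m)) *~ sgn l.+1).
  abel.
rewrite IH' h; hnorm; abel.
Qed.

Lemma bd_db m : hcomp (bS M m.+1) (dd M m.+1) + hcomp (dd M m) (bS M m) = idm _ - kappa M m.+1.
Proof.
change (dd M m.+1) with (D m.+1 m.+3); change (dd M m) with (D m m.+2).
rewrite DS; hnorm.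
have h := @BD m m.+1 (leqnn _).
have h2 := @PsT m m.+1 (leqnn _).
change (bS M m.+1) with (P m.+1 m.+3).
rewrite [P m.+1 m.+3]PS; hnorm; rewrite fs_same //.
rewrite kappaK /=.
transitivity ((hcomp (P m.+1 m.+3) (D m.+1 m.+2) + hcomp (D m m.+2) (bS M m)) +
  hcomp (P m.+1 m.+2) (degen M m.+1 m.+2) *~ sgn m.+2 + idm _ *~ sgn m.+2 *~ sgn m.+2).
  rewrite [P m.+1 m.+3]PS; hnorm; abel.
change (P m.+1 m.+3) with (bS M m.+1); rewrite h h2; change (P m m.+2) with (bS M m); hnorm; abel.
Qed.

Lemma bd0 : hcomp (bS M 0) (dd M 0) = idm _ - kappa M 0.
Proof.
change (bS M 0) with (P 0 2); change (dd M 0) with (D 0 2).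
rewrite !PS !DS P0 D0; hnorm; rewrite !fs_same // fs_succ //.
rewrite kappaK; change (K 0) with (T 0); rewrite /T; abel.
Qed.

Lemma kappa_eq0 : kappa M 0 = idm _ - hcomp (bS M 0) (dd M 0).
Proof. rewrite bd0; abel. Qed.

Lemma kappa_eqS m : kappa M m.+1 = idm _ - hcomp (bS M m.+1) (dd M m.+1) - hcomp (dd M m) (bS M m).
Proof. rewrite -addrA -opprD bd_db; abel. Qed.

Lemma sD n j k : (k <= j)%N -> (j <= n.+1)%N ->
  hcomp (degen M n.+1 j.+1) (D n k) = hcomp (D n.+1 k) (degen M n j).
Proof.
move=> hk hj; elim: k hk => [|k IH] hk; first by rewrite !D0 hcomp0r hcomp0l.
rewrite !DS; hnorm; rewrite IH ?(ltnW hk) // (@ss_rel n k j) //; exact: ltnW.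
Qed.

Lemma DDk n k : (k <= n.+2)%N -> hcomp (D n.+1 k.+1) (D n k) = 0.
Proof.
elim: k => [|k IH] hk; first by rewrite D0 hcomp0r.
rewrite [D n.+1 k.+2]DS [D n k.+1]DS; hnorm.
rewrite IH ?(ltnW hk) // (@sD n k k) // [D n.+1 k.+1]DS; hnorm.
rewrite (@ss_rel n k k) //; abel.
Qed.

Lemma dd2 n : hcomp (dd M n.+1) (dd M n) = 0.
Proof. exact: (@DDk n n.+2). Qed.

Lemma kd n : hcomp (dd M n) (kappa M n) = hcomp (kappa M n.+1) (dd M n).
Proof.
rewrite kappa_eqS; case: n => [|m].
  rewrite kappa_eq0; hnorm; rewrite -!hA dd2 hcomp0r comp1m compm1; abel.
rewrite kappa_eqS; hnorm; rewrite -!hA !dd2 !hcomp0r comp1m compm1.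
rewrite [hcomp (dd M m.+1) (hcomp (dd M m) _)]hA dd2 hcomp0l; abel.
Qed.

Lemma kd_pow n i : hcomp (endo_pow (kappa M n.+1) i) (dd M n) = hcomp (dd M n) (endo_pow (kappa M n) i).
Proof.
elim: i => [|i IH]; first by rewrite /= comp1m compm1.
by rewrite !pow_S -hA IH hA -kd hA.
Qed.

Lemma R1 m : hcomp (face M m 0) (K m.+1) = hcomp (K m) (face M m 1 - face M m 0).
Proof.
rewrite /K -/K; hnorm; rewrite (@Tf_rel m 0) // hA -/(T m).
case: m => [|m]; first by abel.
rewrite /K; hnorm; rewrite -!hA (@ff_rel m 0 1) //=; abel.
Qed.

Lemma R2 m i : (1 <= i)%N -> (i <= m.+1)%N ->
  hcomp (face M m.+1 i) (K m.+2) = hcomp (K m.+1) (face M m.+1 i.+1).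
Proof.
move=> h1 h2; rewrite /K; hnorm; rewrite (@Tf_rel m.+1 i) // hA (@fs_lt m i m.+2) //=; last lia.
rewrite -!hA (@ff_rel m 0 i.+1) //=; abel.
Qed.

Lemma R3 m : hcomp (face M m m.+1) (K m.+1) = 0.
Proof.
rewrite /K; hnorm; rewrite Tlast hA fs_same // comp1m; abel.
Qed.

Lemma L1 m k : (k <= m)%N -> hcomp (P m k.+1) (K m.+1) = - hcomp (K m) (P m k.+2).
Proof.
elim: k => [|k IH] hk.
  rewrite P1 R1 [P m 2]PS P1; hnorm; abel.
rewrite [P m k.+2]PS compDl IH ?(ltnW hk) // hcompzl.
case: m hk IH => [|m] hk IH; first by [].
rewrite (@R2 m k.+1) //.
rewrite [P m.+1 k.+3]PS; hnorm; abel.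
Qed.

Lemma bK m : hcomp (bS M m) (K m.+1) = - hcomp (K m) (bS M m).
Proof.
change (bS M m) with (P m m.+2); rewrite [P m m.+2]PS compDl hcompzl R3 L1 //.
by rewrite mul0rz addr0 -PS.
Qed.

Lemma L2 m k : forall j, (j + k <= m.+1)%N ->
  hcomp (P m j.+1) (endo_pow (K m.+1) k) = hcomp (endo_pow (K m) k) (P m (j + k).+1) *~ sgn k.
Proof.
elim: k => [|k IH] j hjk; first by rewrite /= comp1m compm1 addn0 z0.
rewrite !pow_S hA L1; last lia.
rewrite hcompNl -hA IH; last lia.
by rewrite hcompzr hA addnS addSn zS.
Qed.

Lemma bK_pow m k : hcomp (bS M m) (endo_pow (K m.+1) k) = hcomp (endo_pow (K m) k) (bS M m) *~ sgn k.
Proof.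
elim: k => [|k IH]; first by rewrite /= comp1m compm1 z0.
rewrite !pow_Sr hA IH hcompzl -hA bK hcompNr hA zS; by rewrite mulNrz.
Qed.

Lemma bkappa_pow m k :
  hcomp (bS M m) (endo_pow (kappa M m.+1) k) = hcomp (endo_pow (kappa M m) k) (bS M m).
Proof.
rewrite !kappaK !pow_z hcompzr hcompzl bK_pow -mulrzA sgnS exprNn.
by rewrite -/(sgn k) mulrA sgn_sq mul1r.
Qed.

Lemma Ks0 n : hcomp (K n.+1) (degen M n 0) = 0.
Proof.
rewrite /K; hnorm; rewrite Ts0 -hA fs_same // compm1; abel.
Qed.

Lemma Ks n i : (i <= n)%N ->
  hcomp (K n.+2) (degen M n.+1 i.+1) = hcomp (degen M n.+1 i) (K n.+1).
Proof.
move=> hi; rewrite /K; hnorm; rewrite Ts_rel //; last lia.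
rewrite -hA (@fs_lt n 0 i.+1) //=; last lia.
rewrite hA -(@ss_rel n i n.+1) //; last lia.
rewrite -!hA; first abel. all: lia.
Qed.

Lemma Kpow_s n k i : (k <= i)%N -> (i <= n.+1)%N ->
  hcomp (endo_pow (K n.+2) k) (degen M n.+1 i) = hcomp (degen M n.+1 (i - k)) (endo_pow (K n.+1) k).
Proof.
move=> hk hi; elim: k hk => [|k IH] hk; first by rewrite /= comp1m compm1 subn0.
rewrite !pow_S -hA IH ?(ltnW hk) // hA.
have -> : (i - k = (i - k.+1).+1)%N by lia.
by rewrite Ks ?hA //; lia.
Qed.

Lemma Kpow_zero n j : (j < n.+1)%N -> hcomp (endo_pow (K n.+2) n.+1) (degen M n.+1 j) = 0.
Proof.
move=> hj; have := @pow_add A _ (K n.+2) (n - j) j.+1.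
rewrite (_ : (n - j + j.+1 = n.+1)%N); last lia.
move=> ->; rewrite pow_S -!hA (@Kpow_s n j j) // ?subnn; last lia.
by rewrite [hcomp (K n.+2) _]hA Ks0 hcomp0l hcomp0r.
Qed.

Lemma bs0 m : hcomp (bS M m.+1) (degen M m.+1 0) = - hcomp (degen M m 0) (bS M m - face M m 0).
Proof.
change (bS M m.+1) with (P m.+1 (2 + m.+1)).
rewrite (@PsC m 0 m.+1) //= P0 hcomp0r -P1 add0r.
by [].
Qed.

Lemma bK_zero m : hcomp (bS M m - face M m 0) (endo_pow (K m.+1) m.+1) = 0.
Proof.
rewrite hcompBl -P1 (@L2 m m.+1 0) // bK_pow add0n; change (P m m.+2) with (bS M m).
by rewrite subrr.
Qed.

Lemma sgn_pow_S n : sgn n.+1 ^+ n = 1.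
Proof.
by rewrite /sgn -exprM -signr_odd oddM /= andNb expr0.
Qed.

Lemma sgn_pow_self n : sgn n ^+ n = sgn n.
Proof.
by rewrite /sgn -exprM -[LHS]signr_odd oddM andbb signr_odd.
Qed.

Lemma piform n : piDK M n =
  hcomp (endo_pow (K n) n) (hcomp (bS M n) (degen M n n.+1) + idm _ *~ sgn n).
Proof.
rewrite /piDK kappaK pow_z sgn_pow_S mulr1z hA -P1 (@L2 n n 0) // add0n.
rewrite hcompzl zz -hA; congr (hcomp _ _).
change (bS M n) with (P n n.+2); rewrite [P n n.+2]PS; hnorm; rewrite fs_same //; abel.
Qed.

Lemma telesc (a : Ob A) (f : Defs.Hom a a) k :
  \sum_(i < k) hcomp (idm a - f) (endo_pow f i) = idm a - endo_pow f k.
Proof.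
elim: k => [|k IH]; first by rewrite big_ord0 /= subrr.
rewrite big_ord_recr /= IH hcompBl comp1m; abel.
Qed.

Lemma key m : hcomp (endo_pow (K m.+1) m.+1) (hcomp (bS M m.+1) (D m.+1 m.+2)) = 0.
Proof.
rewrite hA.
have -> : hcomp (endo_pow (K m.+1) m.+1) (bS M m.+1) =
  hcomp (bS M m.+1) (endo_pow (K m.+2) m.+1) *~ sgn m.+1 by rewrite bK_pow zz.
rewrite hcompzl -hA /D hcomp_sumr big_ord_recr /= big1 => [|j _]; last first.
  by rewrite hcompzr Kpow_zero // mul0rz.
rewrite add0r hcompzr (@Kpow_s m m.+1 m.+1) // subnn hcompzr hA bs0 hcompNl -hA bK_zero.
by rewrite hcomp0r oppr0 !mul0rz.
Qed.

Lemma pi_eq m : piDK M m.+1 =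
  endo_pow (kappa M m.+1) m.+1 - hcomp (hcomp (bS M m.+1) (dd M m.+1)) (endo_pow (kappa M m.+1) m.+1).
Proof.
rewrite -hA -kd_pow hA bkappa_pow -hA.
rewrite !kappaK pow_z sgn_pow_self piform.
change (dd M m.+1) with (D m.+1 m.+3); rewrite [D m.+1 m.+3]DS.
hnorm; rewrite key; hnorm; rewrite compm1; abel.
Qed.


Lemma four (a b c d e : Ob A) (f : Defs.Hom d e) (g : Defs.Hom c d) (h : Defs.Hom b c) (k : Defs.Hom a b) :
  hcomp (hcomp f g) (hcomp h k) = hcomp f (hcomp (hcomp g h) k).
Proof. by rewrite !hA. Qed.

Lemma part1 n : hcomp (bS M n) (connesB M n) + Bb_low M n = idm (Mo M n) - piDK M n.
Proof.
case: n => [|m].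
  rewrite /connesB big_ord1 /= compm1 addr0 bd0 piform /= comp1m.
  change (bS M 0) with (P 0 2); rewrite !PS P0; hnorm.
  rewrite fs_same //; abel.
rewrite /= /connesB hcomp_sumr hcomp_suml.
under eq_bigr do rewrite hA.
under [in X in _ + X = _]eq_bigr do rewrite -hA -bkappa_pow hA.
rewrite big_ord_recr [X in endo_pow _ X]/=.
have E : \sum_(i < m.+1) hcomp (idm _ - kappa M m.+1) (endo_pow (kappa M m.+1) i) =
  \sum_(i < m.+1) hcomp (hcomp (bS M m.+1) (dd M m.+1)) (endo_pow (kappa M m.+1) i) +
  \sum_(i < m.+1) hcomp (hcomp (dd M m) (bS M m)) (endo_pow (kappa M m.+1) i).
  by rewrite -big_split; apply: eq_bigr => i _; rewrite -bd_db compDl.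
rewrite addrAC -E telesc pi_eq; abel.
Qed.

Lemma part2 n : hcomp (connesB M n.+1) (connesB M n) = 0.
Proof.
rewrite /connesB hcomp_suml big1 // => i _; rewrite hcomp_sumr big1 // => j _.
by rewrite four kd_pow -four dd2 hcomp0l.
Qed.

End Alg.

Theorem mainTheorem17 (A : preadditive) (M : duplicial A) (n : nat) :
  hcomp (bS M n) (connesB M n) + Bb_low M n = idm (Mo M n) - piDK M n /\
  hcomp (connesB M n.+1) (connesB M n) = 0.
Proof. split; [exact: part1 | exact: part2]. Qed.
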